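(* For $d\in[0,D]$, let $U(d)$ be the optimal value of \[ \min_{\{E_n\},\{t_n\}} \ \sum_{n=1}^N E_n\left(1+\frac{h_n}{g_n}\right) \] subject to \[ d\le \sum_{n=1}^N t_n W\ln\left(1+\frac{E_n h_n}{t_n\sigma^2 W}\right),\qquad 2\sum_{n=1}^N t_n\le T-\frac{Ld}{f_B},\qquad E_n\ge 0,\ t_n\ge 0\ \ \forall n. \] Equivalently, $U(d)$ is the optimal value of \[ \min_{\{E_n\ge0\}} \sum_{n=1}^N E_n\left(1+\frac{h_n}{g_n}\right)\quad \text{s.t.}\quad \sum_{n=1}^N E_nh_n\ge \frac12\sigma^2W\left(T-\frac{Ld}{f_B}\right)\left(e^{\frac{2d}{W(T-Ld/f_B)}}-1\right). \] Then the problem \[ \min_{0\le d\le D}\ U(d)+\frac{\kappa L^3(D-d)^3}{T^2} \] is a convex optimization problem, i.e., its objective is a convex function of $d$.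
   Context: All parameters $N, h_n, g_n, W, \sigma^2, \kappa, L, D, T, f_B$ are given positive constants, and $n$ ranges over $\{1,\dots,N\}$. The term $t_n W\ln\left(1+\frac{E_n h_n}{t_n\sigma^2W}\right)$ is interpreted as $0$ when $t_n=0$. Here $d$ ranges over values with $Ld\le f_BT$; the value $U(d)$ is understood as $+\infty$ when the inner problem is infeasible. *)

(* Defs.v *)
From HB Require Import structures.
From mathcomp Require Import all_boot all_order all_algebra.
From mathcomp Require Import all_classical all_reals.
From mathcomp Require Import ereal exp.

Set Implicit Arguments.
Unset Strict Implicit.
Unset Printing Implicit Defensive.
Import Order.TTheory GRing.Theory Num.Theory.
Local Open Scope ring_scope.

Section Defs.
Variables (R : realType) (N : nat) (h g : 'I_N -> R) (W sigma L T fB : R).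

Definition rate (n : 'I_N) (t E : R) : R :=
  if t == 0 then 0 else t * W * ln (1 + E * h n / (t * sigma ^+ 2 * W)).

Definition feasible (d : R) (E t : 'I_N -> R) : Prop :=
  [/\ forall n, 0 <= E n, forall n, 0 <= t n,
      d <= \sum_(n < N) rate n (t n) (E n)
    & 2 * \sum_(n < N) t n <= T - L * d / fB].

Definition cost (E : 'I_N -> R) : R := \sum_(n < N) E n * (1 + h n / g n).

(* optimal value U(d) (infimum; +oo when infeasible) *)
Definition U (d : R) : \bar R :=
  ereal_inf [set x | exists E t, feasible d E t /\ x = (cost E)%:E].

Definition outer_obj (kappa D : R) (d : R) : \bar R :=
  (U d + (kappa * L ^+ 3 * (D - d) ^+ 3 / T ^+ 2)%:E)%E.
End Defs.

(* Main.v *)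
Require Import Defs.
From HB Require Import structures.
From mathcomp Require Import all_boot all_order all_algebra.
From mathcomp Require Import all_classical all_reals.
From mathcomp Require Import ereal exp.
From mathcomp Require Import ring lra.
Import Order.TTheory GRing.Theory Num.Theory.
Local Open Scope ring_scope.

Section Helpers.
Variables (R : realType) (N : nat) (h g : 'I_N -> R) (W sigma L T fB : R).
Hypotheses (hpos : forall n, 0 < h n) (gpos : forall n, 0 < g n)
  (Wpos : 0 < W) (sigmapos : 0 < sigma) (fBpos : 0 < fB).

Lemma pos1D (x : R) : 0 <= x -> 0 < 1 + x.
Proof. move=> ?; lra. Qed.

Lemma ln_key (u m : R) : 0 < u -> 0 < m -> ln u <= ln m + u / m - 1.
Proof.
move=> u0 m0.
have hx : -1 < u / m - 1 by have := divr_gt0 u0 m0; lra.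
have := le_ln1Dx hx.
have -> : 1 + (u / m - 1) = u / m by ring.
rewrite lnM ?posrE ?invr_gt0 // lnV ?posrE //.
lra.
Qed.

Lemma rate_hom n (a t E : R) : 0 <= a ->
  rate h W sigma n (a * t) (a * E) = a * rate h W sigma n t E.
Proof.
move=> a0; rewrite /rate.
have [->|an0] := eqVneq a 0; first by rewrite !mul0r eqxx.
rewrite mulf_eq0 (negbTE an0) /=.
case: (t =P 0) => [t0|/eqP tn0]; first by rewrite mulr0.
have -> : a * E * h n / (a * t * sigma ^+ 2 * W) = E * h n / (t * sigma ^+ 2 * W).
  by field; rewrite tn0 an0 !gt_eqF.
by rewrite !mulrA.
Qed.

Lemma rate_mono n (t E1 E2 : R) : 0 <= t -> 0 <= E1 -> E1 <= E2 ->
  rate h W sigma n t E1 <= rate h W sigma n t E2.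
Proof.
move=> t0 E10 E12; rewrite /rate.
have [//|tn0] := eqVneq t 0.
have tp : 0 < t by rewrite lt_def tn0 t0.
have dp : 0 < t * sigma ^+ 2 * W by rewrite !mulr_gt0 // exprn_gt0.
have hn := hpos n.
apply: ler_wpM2l; first by rewrite mulr_ge0 // ltW.
have E20 : 0 <= E2 by apply: le_trans E12.
rewrite ler_ln ?posrE; last 2 first.
- by apply: pos1D; rewrite divr_ge0 // ?mulr_ge0 // ltW.
- by apply: pos1D; rewrite divr_ge0 // ?mulr_ge0 // ltW.
rewrite lerD2l; apply: ler_wpM2r; first by rewrite invr_ge0 ltW.
by apply: ler_wpM2r => //; apply: ltW.
Qed.

Lemma rate_superadd n (t1 t2 E1 E2 : R) : 0 <= t1 -> 0 <= t2 ->
  0 <= E1 -> 0 <= E2 ->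
  rate h W sigma n t1 E1 + rate h W sigma n t2 E2 <=
  rate h W sigma n (t1 + t2) (E1 + E2).
Proof.
move=> t10 t20 E10 E20.
have [->|t1n] := eqVneq t1 0.
  rewrite add0r; have -> : rate h W sigma n 0 E1 = 0 by rewrite /rate eqxx.
  by rewrite add0r; apply: rate_mono => //; lra.
have [->|t2n] := eqVneq t2 0.
  rewrite addr0; have -> : rate h W sigma n 0 E2 = 0 by rewrite /rate eqxx.
  have H : E1 <= E1 + E2 by lra.
  have := rate_mono n t1 E1 (E1 + E2) t10 E10 H; lra.
have t1p : 0 < t1 by rewrite lt_def t1n t10.
have t2p : 0 < t2 by rewrite lt_def t2n t20.
have sp : 0 < t1 + t2 by lra.
rewrite /rate (negbTE t1n) (negbTE t2n) (gt_eqF sp).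
have hn := hpos n.
have s2 : 0 < sigma ^+ 2 by rewrite exprn_gt0.
set k := h n / (sigma ^+ 2 * W).
have kp : 0 < k by rewrite /k divr_gt0 // mulr_gt0.
have eqk (t E : R) : 0 < t -> E * h n / (t * sigma ^+ 2 * W) = k * E / t.
  move=> tp; rewrite /k; field.
  by rewrite (gt_eqF tp) (gt_eqF Wpos) (gt_eqF sigmapos).
rewrite !eqk //.
set u1 := 1 + k * E1 / t1; set u2 := 1 + k * E2 / t2.
set m := 1 + k * (E1 + E2) / (t1 + t2).
have u1p : 0 < u1 by apply: pos1D; apply: divr_ge0; [apply: mulr_ge0; lra | lra].
have u2p : 0 < u2 by apply: pos1D; apply: divr_ge0; [apply: mulr_ge0; lra | lra].
have mp : 0 < m by apply: pos1D; apply: divr_ge0; [apply: mulr_ge0; lra | lra].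
have k1 := ln_key u1 m u1p mp; have k2 := ln_key u2 m u2p mp.
apply: (@le_trans _ _ (t1 * W * (ln m + u1 / m - 1) + t2 * W * (ln m + u2 / m - 1))).
  by apply: lerD; apply: ler_wpM2l => //; rewrite mulr_ge0 // ltW.
set lm := ln m.
have -> : t1 * W * (lm + u1 / m - 1) + t2 * W * (lm + u2 / m - 1)
   = (t1 + t2) * W * lm + W * ((t1 * u1 + t2 * u2) / m - (t1 + t2)) by field; rewrite gt_eqF.
have -> : t1 * u1 + t2 * u2 = (t1 + t2) * m.
  rewrite /u1 /u2 /m; field; rewrite !gt_eqF //.
rewrite mulfK ?gt_eqF // subrr mulr0 addr0 //.
Qed.

Lemma feasible_conv (x y lam : R) E1 t1 E2 t2 :
  0 <= lam <= 1 ->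
  feasible h W sigma L T fB x E1 t1 -> feasible h W sigma L T fB y E2 t2 ->
  feasible h W sigma L T fB (lam * x + (1 - lam) * y)
    (fun n => lam * E1 n + (1 - lam) * E2 n)
    (fun n => lam * t1 n + (1 - lam) * t2 n).
Proof.
move=> /andP[l0 l1] [E10 t10 r1 c1] [E20 t20 r2 c2].
have l0' : 0 <= 1 - lam by lra.
split.
- by move=> n; rewrite addr_ge0 // mulr_ge0.
- by move=> n; rewrite addr_ge0 // mulr_ge0.
- apply: (@le_trans _ _ (lam * \sum_(n < N) rate h W sigma n (t1 n) (E1 n) +
     (1 - lam) * \sum_(n < N) rate h W sigma n (t2 n) (E2 n))).
    by apply: lerD; apply: ler_wpM2l.
  rewrite !mulr_sumr -big_split /=; apply: ler_sum => n _.
  rewrite -!rate_hom //; apply: rate_superadd; by rewrite mulr_ge0.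
- rewrite big_split /= -!mulr_sumr.
  have fn : fB != 0 by rewrite gt_eqF.
  have e1 : 2 * (lam * \sum_(i < N) t1 i) = lam * (2 * \sum_(i < N) t1 i) by ring.
  have e2 : 2 * ((1 - lam) * \sum_(i < N) t2 i) = (1 - lam) * (2 * \sum_(i < N) t2 i) by ring.
  rewrite mulrDr e1 e2.
  have -> : T - L * (lam * x + (1 - lam) * y) / fB =
     lam * (T - L * x / fB) + (1 - lam) * (T - L * y / fB) by field.
  by apply: lerD; apply: ler_wpM2l.
Qed.

Lemma cost_conv (lam : R) E1 E2 :
  cost h g (fun n => lam * E1 n + (1 - lam) * E2 n) =
  lam * cost h g E1 + (1 - lam) * cost h g E2.
Proof.
rewrite /cost !mulr_sumr -big_split /=; apply: eq_bigr => n _; ring.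
Qed.

Lemma cost_ge0 E : (forall n, 0 <= E n) -> 0 <= cost h g E.
Proof.
move=> E0; rewrite /cost sumr_ge0 // => n _.
by rewrite mulr_ge0 // addr_ge0 // divr_ge0 // ltW.
Qed.

Lemma U_ge0 d : (0 <= U h g W sigma L T fB d)%E.
Proof.
apply/ereal_infP => _ [E [t [[E0 _ _ _] ->]]].
by rewrite lee_fin cost_ge0.
Qed.


Lemma U_conv (x y lam : R) : 0 <= lam <= 1 ->
  (U h g W sigma L T fB (lam * x + (1 - lam) * y) <=
   lam%:E * U h g W sigma L T fB x + (1 - lam)%:E * U h g W sigma L T fB y)%E.
Proof.
move=> /andP[l0 l1].
have [->|ln0] := eqVneq lam 0.
  by rewrite mul0r add0r subr0 mul1r mul0e add0e mul1e.
have [->|ln1] := eqVneq lam 1.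
  by rewrite subrr mul0r addr0 mul1r mul1e mul0e adde0.
have lp : 0 < lam by rewrite lt_def ln0 l0.
have lq : 0 < 1 - lam by rewrite subr_gt0 lt_neqAle ln1 l1.
have Ux0 := U_ge0 x; have Uy0 := U_ge0 y.
have Px : (0 <= lam%:E * U h g W sigma L T fB x)%E by rewrite mule_ge0 // lee_fin ltW.
have Py : (0 <= (1 - lam)%:E * U h g W sigma L T fB y)%E by rewrite mule_ge0 // lee_fin ltW.
case Ux: (U h g W sigma L T fB x) Ux0 Px => [ux| |] // Ux0' Px'; last first.
  rewrite muleC gt0_mulye ?lte_fin // addye ?leey //.
  by apply: contraTN isT => /eqP Hy; move: Py; rewrite Hy.
case Uy: (U h g W sigma L T fB y) Uy0 Py => [uy| |] // Uy0' Py'; last first.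
  rewrite [X in (_ + X)%E]muleC gt0_mulye ?lte_fin // addey ?leey //.
apply/lee_addgt0Pr => e e0.
have : (U h g W sigma L T fB x < (ux + e)%:E)%E by rewrite Ux lte_fin; lra.
move/ereal_inf_lt => [_ [E1 [t1 [f1 ->]]]]; rewrite lte_fin => c1.
have : (U h g W sigma L T fB y < (uy + e)%:E)%E by rewrite Uy lte_fin; lra.
move/ereal_inf_lt => [_ [E2 [t2 [f2 ->]]]]; rewrite lte_fin => c2.
apply: le_trans (_ : (cost h g (fun n => lam * E1 n + (1 - lam) * E2 n))%:E <= _)%E.
  apply: ereal_inf_lbound.
  exists (fun n => lam * E1 n + (1 - lam) * E2 n).
  exists (fun n => lam * t1 n + (1 - lam) * t2 n); split => //.
  by apply: feasible_conv => //; rewrite l0 l1.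
rewrite -!EFinM -!EFinD lee_fin cost_conv.
nra.
Qed.
End Helpers.

Theorem lemma4 (R : realType) (N : nat) (h g : 'I_N -> R)
  (W sigma kappa L D T fB : R)
  (hpos : forall n, 0 < h n) (gpos : forall n, 0 < g n)
  (Wpos : 0 < W) (sigmapos : 0 < sigma) (kappapos : 0 < kappa)
  (Lpos : 0 < L) (Dpos : 0 < D) (Tpos : 0 < T) (fBpos : 0 < fB) :
  forall x y lam : R,
    0 <= x <= D -> L * x <= fB * T ->
    0 <= y <= D -> L * y <= fB * T ->
    0 <= lam <= 1 ->
    (outer_obj h g W sigma L T fB kappa D (lam * x + (1 - lam) * y)
     <= lam%:E * outer_obj h g W sigma L T fB kappa D x
        + (1 - lam)%:E * outer_obj h g W sigma L T fB kappa D y)%E.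
Proof.
move=> x y lam /andP[x0 xD] Lx /andP[y0 yD] Ly /andP[l0 l1].
rewrite /outer_obj.
set K := kappa * L ^+ 3 / T ^+ 2.
have K0 : 0 <= K by rewrite /K divr_ge0 ?mulr_ge0 ?exprn_ge0 // ltW.
have cx : 0 <= K * (D - x) ^+ 3 by rewrite mulr_ge0 // exprn_ge0 // subr_ge0.
have cy : 0 <= K * (D - y) ^+ 3 by rewrite mulr_ge0 // exprn_ge0 // subr_ge0.
have ge := @U_ge0 R N h g W sigma L T fB hpos gpos.
have e (d : R) : kappa * L ^+ 3 * (D - d) ^+ 3 / T ^+ 2 = K * (D - d) ^+ 3
  by rewrite /K; ring.
rewrite !e.
rewrite !ge0_muleDr ?lee_fin // addeACA.
apply: leeD; first by apply: (@U_conv R N h g W sigma L T fB hpos gpos Wpos sigmapos fBpos); rewrite l0 l1.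
rewrite -!EFinM -!EFinD lee_fin.
set a := D - x; set b := D - y.
have -> : D - (lam * x + (1 - lam) * y) = lam * a + (1 - lam) * b by rewrite /a /b; ring.
have a0 : 0 <= a by rewrite /a subr_ge0.
have b0 : 0 <= b by rewrite /b subr_ge0.
have key : (lam * a + (1 - lam) * b) ^+ 3 <= lam * a ^+ 3 + (1 - lam) * b ^+ 3.
  have -> : lam * a ^+ 3 + (1 - lam) * b ^+ 3 = (lam * a + (1 - lam) * b) ^+ 3
     + lam * (1 - lam) * (a - b) ^+ 2 * ((1 + lam) * a + (2 - lam) * b) by ring.
  rewrite lerDl; apply: mulr_ge0; [apply: mulr_ge0; [apply: mulr_ge0; lra | exact: sqr_ge0] | apply: addr_ge0; apply: mulr_ge0; lra].
have := ler_wpM2l K0 key.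
have -> : K * (lam * a ^+ 3 + (1 - lam) * b ^+ 3) = lam * (K * a ^+ 3) + (1 - lam) * (K * b ^+ 3) by ring.
by [].
Qed.
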